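(* Let $\sigma>1$ and $a>0$ with $\sigma e^{-a}>1$. Define a sequence $(\rho^*_k)_{k\ge0}$ by the recurrence $$\rho^*_0=\frac{\sigma e^{-a}-1}{\sigma-1},\qquad \rho^*_k=\frac{e^{-a}}{(\sigma-1)\rho^*_0+1-e^{-a}}\Big(\sigma\frac{a^k}{k!}\rho^*_0+\sum_{l=1}^{k-1}\frac{a^{k-l}}{(k-l)!}\rho^*_l\Big),\quad k\ge1.$$ Then its generating function is $\sum_{k\ge0}\rho^*_kX^k=(\sigma e^{-a}-1)\dfrac{e^{aX}}{\sigma-e^{aX}}$, and for every $k\ge0$ $$\rho^*_k=(\sigma e^{-a}-1)\frac{a^k}{k!}\sum_{i\ge1}\frac{i^k}{\sigma^i}.$$ Moreover $\sum_{k\ge0}\rho^*_k=1$, so $(\rho^*_k)_{k\ge0}$ is a probability distribution on $\mathbb N$, whose expectation and variance are $$\frac{\sigma a e^{-a}}{\sigma e^{-a}-1}\qquad\text{and}\qquad \frac{\sigma a e^{-a}(\sigma e^{-a}+a-1)}{(\sigma e^{-a}-1)^2}.$$ *)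

(* Defs.v *)
From Stdlib Require Import Reals Lra Lia Arith Factorial.
Open Scope R_scope.

Definition rho0 (sigma a : R) : R := (sigma * exp (- a) - 1) / (sigma - 1).

(* rho_aux n : a function that is correct (equal to rho*_j) for all j <= n. *)
Fixpoint rho_aux (sigma a : R) (n : nat) : nat -> R :=
  match n with
  | O => fun _ => rho0 sigma a
  | S m =>
      let prev := rho_aux sigma a m in
      let k := S m in
      let newv :=
        exp (- a) / ((sigma - 1) * rho0 sigma a + 1 - exp (- a)) *
        (sigma * (a ^ k / INR (fact k)) * rho0 sigma a
         + sum_f_R0 (fun l => if (1 <=? l)%nat
                              then a ^ (k - l) / INR (fact (k - l)) * prev l
                              else 0) (k - 1)) in
      fun j => if (j <=? m)%nat then prev j else newv
  end.

Definition rho (sigma a : R) (k : nat) : R := rho_aux sigma a k k.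

(* Main.v *)
Require Import Defs.
From Stdlib Require Import Reals Lra Lia Arith Factorial.
From Coquelicot Require Import Coquelicot.
Open Scope R_scope.

Lemma rho_aux_S s a m j : (j <= m)%nat -> rho_aux s a (S m) j = rho_aux s a m j.
Proof. intros H. simpl. apply Nat.leb_le in H. rewrite H. reflexivity. Qed.

Lemma rho_aux_le s a n j : (j <= n)%nat -> rho_aux s a n j = rho s a j.
Proof.
  induction n as [|n IH]; intros H.
  - assert (j = 0%nat) by lia. subst. reflexivity.
  - destruct (Nat.eq_dec j (S n)) as [->|Hn]; [reflexivity|].
    rewrite rho_aux_S by lia. apply IH. lia.
Qed.

Lemma rho_zero s a : rho s a 0 = rho0 s a.
Proof. reflexivity. Qed.

Lemma rho_aux_unf s a m j : rho_aux s a (S m) j =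
  if (j <=? m)%nat then rho_aux s a m j else
  exp (- a) / ((s - 1) * rho0 s a + 1 - exp (- a)) *
  (s * (a ^ S m / INR (fact (S m))) * rho0 s a
   + sum_f_R0 (fun l => if (1 <=? l)%nat
                        then a ^ (S m - l) / INR (fact (S m - l)) * rho_aux s a m l
                        else 0) (S m - 1)).
Proof. reflexivity. Qed.

Lemma rho_S s a m : rho s a (S m) =
  exp (- a) / ((s - 1) * rho0 s a + 1 - exp (- a)) *
  (s * (a ^ S m / INR (fact (S m))) * rho0 s a
   + sum_f_R0 (fun l => if (1 <=? l)%nat
                        then a ^ (S m - l) / INR (fact (S m - l)) * rho s a l
                        else 0) m).
Proof.
  unfold rho at 1. rewrite rho_aux_unf.
  assert (Hb : (S m <=? m)%nat = false) by (apply Nat.leb_gt; lia).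
  rewrite Hb. replace (S m - 1)%nat with m by lia. f_equal. f_equal.
  apply sum_eq. intros i Hi. destruct (1 <=? i)%nat; [|reflexivity].
  rewrite rho_aux_le by lia. reflexivity.
Qed.

Lemma sum_guard (g : nat -> R) m :
  sum_f_R0 (fun l => if (1 <=? l)%nat then g l else 0) m = sum_f_R0 g m - g 0%nat.
Proof.
  induction m as [|m IH]. simpl. lra.
  rewrite !tech5, IH. change ((1 <=? S m)%nat) with true. lra.
Qed.

Notation isR := (@is_series R_AbsRing R_NormedModule).

Lemma isR_plus (a b : nat -> R) (la lb : R) : isR a la -> isR b lb ->
  isR (fun n => a n + b n) (la + lb).
Proof. intros Ha Hb. exact (is_series_plus _ _ _ _ Ha Hb). Qed.

Lemma isR_scal (c : R) (a : nat -> R) (la : R) : isR a la -> isR (fun n => c * a n) (c * la).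
Proof. intros Ha. exact (is_series_scal _ _ _ Ha). Qed.

Lemma isR_minus (a b : nat -> R) (la lb : R) : isR a la -> isR b lb ->
  isR (fun n => a n - b n) (la - lb).
Proof. intros Ha Hb. exact (is_series_minus _ _ _ _ Ha Hb). Qed.

Lemma isR_ext (a b : nat -> R) (l : R) : (forall n, a n = b n) -> isR a l -> isR b l.
Proof. intros H Ha. exact (is_series_ext _ _ _ H Ha). Qed.

Lemma isR_fin_sum (f : nat -> nat -> R) (L : nat -> R) k :
  (forall l, (l <= k)%nat -> isR (f l) (L l)) ->
  isR (fun i => sum_f_R0 (fun l => f l i) k) (sum_f_R0 L k).
Proof.
  induction k as [|k IH]; intros H.
  - simpl. apply H. lia.
  - simpl. apply isR_plus. apply IH. intros l Hl; apply H; lia. apply H; lia.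
Qed.

Lemma term_le_sum f l n : (forall n, 0 <= f n) -> isR f l -> f n <= l.
Proof.
  intros Hp Hs. apply is_series_Reals in Hs.
  assert (Hg : Un_growing (sum_f_R0 f)).
  { intros m. rewrite tech5. specialize (Hp (S m)). lra. }
  assert (H1 := growing_ineq _ _ Hg Hs n).
  assert (f n <= sum_f_R0 f n).
  { destruct n. simpl; lra. rewrite tech5.
    assert (0 <= sum_f_R0 f n) by (apply cond_pos_sum; auto). lra. }
  lra.
Qed.

Lemma exp_term z n : 0 <= z -> z ^ n / INR (fact n) <= exp z.
Proof.
  intros Hz. assert (H := is_exp_Reals z).
  apply is_pseries_Reals in H. unfold Pser in H. apply is_series_Reals in H.
  assert (H2 := term_le_sum _ _ n (fun m => Rmult_le_pos _ _
            (Rlt_le _ _ (Rinv_0_lt_compat _ (INR_fact_lt_0 m))) (pow_le _ m Hz)) H).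
  unfold Rdiv. rewrite Rmult_comm. exact H2.
Qed.

Lemma exp_mul_nat r n : exp (r * INR n) = exp r ^ n.
Proof.
  induction n as [|n IH]. simpl. rewrite Rmult_0_r. apply exp_0.
  rewrite S_INR, Rmult_plus_distr_l, Rmult_1_r, exp_plus, IH. simpl. ring.
Qed.

Lemma pow_le_exp r y k : 0 < r -> 0 <= y ->
  y ^ k <= INR (fact k) / r ^ k * exp (r * y).
Proof.
  intros Hr Hy. assert (H := exp_term (r * y) k (Rmult_le_pos _ _ (Rlt_le _ _ Hr) Hy)).
  rewrite Rpow_mult_distr in H.
  assert (Hf := INR_fact_lt_0 k). assert (Hrk : 0 < r ^ k) by (apply pow_lt; lra).
  replace (y ^ k) with ((r ^ k * y ^ k / INR (fact k)) * (INR (fact k) / r ^ k))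
    by (field; lra).
  rewrite (Rmult_comm (INR (fact k) / r ^ k)).
  apply Rmult_le_compat_r; [|exact H].
  apply Rlt_le. apply Rdiv_lt_0_compat; lra.
Qed.

Lemma geom_S q : Rabs q < 1 -> isR (fun n => q ^ S n) (q / (1 - q)).
Proof.
  intros Hq. assert (H := isR_scal q _ _ (is_series_geom q Hq)).
  eapply isR_ext; [|exact H]. intros n. reflexivity.
Qed.

Definition sterm (sg : R) (k i : nat) : R := INR (S i) ^ k / sg ^ S i.

Lemma sterm_nonneg sg k i : 0 < sg -> 0 <= sterm sg k i.
Proof.
  intros H. unfold sterm. apply Rmult_le_pos. apply pow_le. apply pos_INR.
  apply Rlt_le, Rinv_0_lt_compat, pow_lt; lra.
Qed.

Lemma sterm_bound sg k r i : 0 < r -> 1 < sg ->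
  sterm sg k i <= INR (fact k) / r ^ k * (exp r / sg) ^ S i.
Proof.
  intros Hr Hs. unfold sterm.
  assert (H := pow_le_exp r (INR (S i)) k Hr (pos_INR _)).
  rewrite exp_mul_nat in H.
  unfold Rdiv at 3. rewrite Rpow_mult_distr, pow_inv.
  assert (Hp : 0 < sg ^ S i) by (apply pow_lt; lra).
  replace (INR (fact k) / r ^ k * (exp r ^ S i * / sg ^ S i))
    with ((INR (fact k) / r ^ k * exp r ^ S i) * / sg ^ S i) by ring.
  unfold Rdiv at 1. apply Rmult_le_compat_r. apply Rlt_le, Rinv_0_lt_compat; lra.
  exact H.
Qed.

Lemma q_bounds r sg : 0 < r -> exp r < sg -> Rabs (exp r / sg) < 1 /\ 0 < exp r / sg.
Proof.
  intros Hr Hs. assert (He := exp_pos r).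
  assert (0 < exp r / sg) by (apply Rdiv_lt_0_compat; lra).
  split; [|lra]. rewrite Rabs_pos_eq by lra.
  apply (Rmult_lt_reg_r sg); [lra|]. unfold Rdiv. rewrite Rmult_assoc, Rinv_l by lra. lra.
Qed.

Lemma ex_sterm_r sg k r : 0 < r -> exp r < sg -> 1 < sg ->
  ex_series (sterm sg k) /\
  Series (sterm sg k) <= INR (fact k) / r ^ k * ((exp r / sg) / (1 - exp r / sg)).
Proof.
  intros Hr Hrs Hs. destruct (q_bounds r sg Hr Hrs) as [Hq Hq0].
  assert (Hb := isR_scal (INR (fact k) / r ^ k) _ _ (geom_S _ Hq)).
  assert (Hex : ex_series (sterm sg k)).
  { apply (ex_series_le (sterm sg k) (fun n => INR (fact k) / r ^ k * (exp r / sg) ^ S n));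
      [|eexists; exact Hb].
    intros n. change (norm (sterm sg k n)) with (Rabs (sterm sg k n)). rewrite Rabs_pos_eq by (apply sterm_nonneg; lra).
    apply sterm_bound; lra. }
  split; [exact Hex|].
  rewrite <- (is_series_unique _ _ Hb).
  apply Series_le; [|eexists; exact Hb].
  intros n. split. apply sterm_nonneg; lra. apply sterm_bound; lra.
Qed.

Lemma ln_half_bound sg : 1 < sg -> 0 < ln sg / 2 /\ exp (ln sg / 2) < sg.
Proof.
  intros Hs. assert (Hl : 0 < ln sg) by (rewrite <- ln_1; apply ln_increasing; lra). split. lra.
  rewrite <- (exp_ln sg) at 2 by lra. apply exp_increasing. lra.
Qed.

Lemma ex_sterm sg k : 1 < sg -> ex_series (sterm sg k).
Proof.
  intros Hs. destruct (ln_half_bound sg Hs). apply (ex_sterm_r sg k (ln sg / 2)); auto.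
Qed.

Definition sk (sg : R) (k : nat) : R := Series (sterm sg k).

Lemma is_sk sg k : 1 < sg -> isR (sterm sg k) (sk sg k).
Proof. intros Hs. apply Series_correct, ex_sterm, Hs. Qed.

Lemma sk_nonneg sg k : 1 < sg -> 0 <= sk sg k.
Proof.
  intros Hs. apply Rle_trans with (sterm sg k 0). apply sterm_nonneg; lra.
  apply term_le_sum. intros n; apply sterm_nonneg; lra. apply is_sk, Hs.
Qed.

Lemma sk_identity sg k : 1 < sg ->
  sum_f_R0 (fun l => Binomial.C k l * sk sg l) k = sg * sk sg k - 1.
Proof.
  intros Hs.
  assert (H1 : isR (fun i => sum_f_R0 (fun l => Binomial.C k l * sterm sg l i) k)
                   (sum_f_R0 (fun l => Binomial.C k l * sk sg l) k)).
  { apply (isR_fin_sum (fun l i => Binomial.C k l * sterm sg l i)). intros l _.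
    apply isR_scal, is_sk, Hs. }
  assert (H2 : isR (fun i => sterm sg k (S i)) (sk sg k - sterm sg k 0)).
  { apply is_series_incr_1.
    match goal with |- is_series _ ?L => replace L with (sk sg k) by (cbn; ring) end.
    apply is_sk, Hs. }
  apply (isR_scal sg) in H2.
  assert (E : forall i, sg * sterm sg k (S i) =
                        sum_f_R0 (fun l => Binomial.C k l * sterm sg l i) k).
  { intros i. unfold sterm.
    replace (sum_f_R0 (fun l => Binomial.C k l * (INR (S i) ^ l / sg ^ S i)) k)
      with (sum_f_R0 (fun l => Binomial.C k l * INR (S i) ^ l * 1 ^ (k - l)) k * / sg ^ S i).
    rewrite <- Binomial.binomial. rewrite <- S_INR.
    assert (0 < sg ^ S i) by (apply pow_lt; lra).
    change (sg ^ S (S i)) with (sg * sg ^ S i). field. lra.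
    rewrite Rmult_comm, scal_sum. apply sum_eq. intros l _. rewrite pow1. field.
    apply pow_nonzero; lra. }
  apply (isR_ext _ _ _ E) in H2.
  assert (X := is_series_unique _ _ H1). assert (Y := is_series_unique _ _ H2).
  rewrite <- X, Y. unfold sterm. simpl. rewrite pow1. field. lra.
Qed.

Definition cc (sg a : R) : R := sg * exp (- a) - 1.
Definition ek (a : R) (k : nat) : R := a ^ k / INR (fact k).
Definition tk (sg a : R) (k : nat) : R := cc sg a * ek a k * sk sg k.

Lemma ek_mul a k l : (l <= k)%nat -> ek a l * ek a (k - l) = ek a k * Binomial.C k l.
Proof.
  intros H. unfold ek, Binomial.C.
  replace (a ^ k) with (a ^ l * a ^ (k - l)) by (rewrite <- pow_add; f_equal; lia).
  assert (H1 := INR_fact_neq_0 l). assert (H2 := INR_fact_neq_0 (k - l)).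
  assert (H3 := INR_fact_neq_0 k). field. auto.
Qed.

Lemma ek0 a : ek a 0 = 1.
Proof. unfold ek. simpl. field. Qed.

Lemma t_rel sg a k : 1 < sg ->
  sg * tk sg a k - sum_f_R0 (fun l => tk sg a l * ek a (k - l)) k = cc sg a * ek a k.
Proof.
  intros Hs.
  replace (sum_f_R0 (fun l => tk sg a l * ek a (k - l)) k)
    with (cc sg a * ek a k * sum_f_R0 (fun l => Binomial.C k l * sk sg l) k).
  rewrite sk_identity by exact Hs. unfold tk. ring.
  rewrite scal_sum. apply sum_eq. intros l Hl. unfold tk.
  replace (cc sg a * ek a l * sk sg l * ek a (k - l))
    with (cc sg a * sk sg l * (ek a l * ek a (k - l))) by ring.
  rewrite ek_mul by exact Hl. ring.
Qed.

Lemma sk0 sg : 1 < sg -> sk sg 0 = / (sg - 1).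
Proof.
  intros Hs. assert (H := sk_identity sg 0 Hs). simpl in H.
  unfold Binomial.C in H. simpl in H.
  replace (1 / (1 * 1) * sk sg 0) with (sk sg 0) in H by field.
  field_simplify_eq; lra.
Qed.

Lemma rho_closed sg a (Hs : 1 < sg) : forall k, rho sg a k = tk sg a k.
Proof.
  assert (Hea := exp_pos (- a)).
  assert (T0 : tk sg a 0 = rho0 sg a).
  { unfold tk, rho0, cc. rewrite ek0, sk0 by exact Hs. field. lra. }
  intros k. induction k as [k IH] using (well_founded_induction lt_wf).
  destruct k as [|m]. { rewrite rho_zero, T0. reflexivity. }
  rewrite rho_S.
  assert (D : (sg - 1) * rho0 sg a + 1 - exp (- a) = (sg - 1) * exp (- a))
    by (unfold rho0; field; lra).
  rewrite D.
  rewrite (sum_guard (fun l => a ^ (S m - l) / INR (fact (S m - l)) * rho sg a l)).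
  rewrite (sum_eq _ (fun l => tk sg a l * ek a (S m - l))).
  2:{ intros i Hi. rewrite IH by lia. unfold ek. ring. }
  assert (R := t_rel sg a (S m) Hs). rewrite tech5 in R.
  replace (S m - S m)%nat with 0%nat in R by lia. rewrite ek0 in R.
  rewrite rho_zero, Nat.sub_0_r.
  fold (ek a (S m)).
  assert (C0 : (sg - 1) * rho0 sg a = cc sg a) by (unfold rho0, cc; field; lra).
  set (S0 := sum_f_R0 (fun l => tk sg a l * ek a (S m - l)) m) in *.
  set (t := tk sg a (S m)) in *. set (e := ek a (S m)) in *.
  apply (Rmult_eq_reg_l (sg - 1)); [|lra].
  replace ((sg - 1) * (exp (- a) / ((sg - 1) * exp (- a)) *
   (sg * e * rho0 sg a + (S0 - e * rho0 sg a))))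
    with (sg * e * rho0 sg a + (S0 - e * rho0 sg a)) by (field; lra).
  rewrite <- C0 in R. nra.
Qed.

Lemma radius_of_bound (b : nat -> R) y M :
  (forall n, Rabs (b n * y ^ n) <= M) -> Rbar_le y (CV_radius b).
Proof.
  intros H. destruct (CV_radius_bounded b) as [Hub _]. apply Hub. exists M. exact H.
Qed.

Lemma radius_lt_of (b : nat -> R) x R0 :
  Rabs x < R0 ->
  (forall y, 0 < y -> y < R0 -> Rbar_le y (CV_radius b)) ->
  Rbar_lt (Rabs x) (CV_radius b).
Proof.
  intros Hx H. assert (Ha := Rabs_pos x).
  apply Rbar_lt_le_trans with ((Rabs x + R0) / 2).
  simpl. lra. apply H; lra.
Qed.

Lemma cc_pos sg a : 1 < sg * exp (- a) -> 0 < cc sg a.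
Proof. unfold cc. lra. Qed.

Lemma ek_nonneg a k : 0 < a -> 0 <= ek a k.
Proof.
  intros Ha. unfold ek. apply Rmult_le_pos. apply pow_le; lra.
  apply Rlt_le, Rinv_0_lt_compat, INR_fact_lt_0.
Qed.

Lemma rho_nonneg sg a k : 1 < sg -> 0 < a -> 1 < sg * exp (- a) -> 0 <= rho sg a k.
Proof.
  intros Hs Ha Hsa. rewrite rho_closed by exact Hs. unfold tk.
  apply Rmult_le_pos. apply Rmult_le_pos. apply Rlt_le, cc_pos, Hsa.
  apply ek_nonneg, Ha. apply sk_nonneg, Hs.
Qed.

Lemma exp_lt_sg sg r : 1 < sg -> r < ln sg -> exp r < sg.
Proof. intros Hs Hr. rewrite <- (exp_ln sg) by lra. apply exp_increasing, Hr. Qed.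

Lemma radius_rho sg a (Hs : 1 < sg) (Ha : 0 < a) (Hsa : 1 < sg * exp (- a)) x :
  Rabs x < ln sg / a -> Rbar_lt (Rabs x) (CV_radius (rho sg a)).
Proof.
  intros Hx. apply (radius_lt_of _ _ _ Hx). intros y Hy Hy2.
  assert (Hr : 0 < a * y) by (apply Rmult_lt_0_compat; lra).
  assert (Hay : a * y < ln sg).
  { apply (Rmult_lt_compat_l a) in Hy2; [|lra].
    replace (a * (ln sg / a)) with (ln sg) in Hy2 by (field; lra). exact Hy2. }
  assert (Hrs := exp_lt_sg sg _ Hs Hay).
  set (Q := (exp (a * y) / sg) / (1 - exp (a * y) / sg)).
  apply (radius_of_bound _ _ (cc sg a * Q)). intros n.
  destruct (ex_sterm_r sg n (a * y) Hr Hrs Hs) as [_ Hb]. fold Q in Hb.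
  fold (sk sg n) in Hb.
  rewrite rho_closed by exact Hs. unfold tk.
  assert (Hc := cc_pos sg a Hsa). assert (He := ek_nonneg a n Ha).
  assert (Hsk := sk_nonneg sg n Hs). assert (Hyn : 0 <= y ^ n) by (apply pow_le; lra).
  rewrite Rabs_pos_eq by (apply Rmult_le_pos; [apply Rmult_le_pos; [apply Rmult_le_pos|]|]; lra).
  apply Rle_trans with (cc sg a * ek a n * y ^ n * (INR (fact n) / (a * y) ^ n * Q)).
  { replace (cc sg a * ek a n * sk sg n * y ^ n) with (cc sg a * ek a n * y ^ n * sk sg n) by ring.
    apply Rmult_le_compat_l. apply Rmult_le_pos; [apply Rmult_le_pos|]; lra. exact Hb. }
  right. unfold ek. rewrite Rpow_mult_distr.
  assert (H1 := INR_fact_neq_0 n). assert (0 < a ^ n) by (apply pow_lt; lra).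
  assert (0 < y ^ n) by (apply pow_lt; lra). field. lra.
Qed.

Lemma radius_ek a (Ha : 0 < a) x : Rbar_lt (Rabs x) (CV_radius (ek a)).
Proof.
  apply (radius_lt_of _ _ (Rabs x + 1)). lra. intros y Hy _.
  apply (radius_of_bound _ _ (exp (a * y))). intros n.
  assert (H := exp_term (a * y) n ltac:(apply Rmult_le_pos; lra)).
  rewrite Rabs_pos_eq. unfold ek. rewrite Rpow_mult_distr in H. unfold Rdiv in *.
  replace (a ^ n * / INR (fact n) * y ^ n) with (a ^ n * y ^ n * / INR (fact n)) by ring.
  exact H.
  apply Rmult_le_pos. apply ek_nonneg, Ha. apply pow_le; lra.
Qed.

Lemma ps_to (a : nat -> R) (x l : R) : is_pseries a x l -> isR (fun n => a n * x ^ n) l.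
Proof. intros H. apply is_pseries_Reals in H. apply is_series_Reals. exact H. Qed.

Lemma ps_of (a : nat -> R) (x l : R) : isR (fun n => a n * x ^ n) l -> is_pseries a x l.
Proof. intros H. apply is_pseries_Reals. apply is_series_Reals in H. exact H. Qed.

Lemma is_ps_ek (a x : R) : is_pseries (ek a) x (exp (a * x)).
Proof.
  assert (H := ps_to _ _ _ (is_exp_Reals (a * x))). apply ps_of.
  eapply isR_ext; [|exact H]. intros n. unfold ek. rewrite Rpow_mult_distr. unfold Rdiv. ring.
Qed.

Definition gfun (sg a t : R) : R := cc sg a * (exp (a * t) / (sg - exp (a * t))).

Lemma gen_fun sg a (Hs : 1 < sg) (Ha : 0 < a) (Hsa : 1 < sg * exp (- a)) (x : R) :
  Rabs x < ln sg / a -> is_pseries (rho sg a) x (gfun sg a x).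
Proof.
  intros Hx.
  assert (Hr := radius_rho sg a Hs Ha Hsa x Hx).
  assert (Hrho := PSeries_correct _ _ (CV_radius_inside _ _ Hr)).
  set (F := PSeries (rho sg a) x) in *. set (E := exp (a * x)).
  assert (Hm := is_pseries_mult _ _ _ _ _ Hrho (is_ps_ek a x) Hr (radius_ek a Ha x)).
  apply ps_to in Hm. apply ps_to in Hrho. assert (He := ps_to _ _ _ (is_ps_ek a x)).
  assert (Hl := isR_minus _ _ _ _ (isR_scal sg _ _ Hrho) (isR_scal (cc sg a) _ _ He)).
  assert (Ext : forall n, sg * (rho sg a n * x ^ n) - cc sg a * (ek a n * x ^ n)
                          = PS_mult (rho sg a) (ek a) n * x ^ n).
  { intros n. unfold PS_mult.
    replace (cc sg a * (ek a n * x ^ n)) with ((cc sg a * ek a n) * x ^ n) by ring.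
    rewrite <- (t_rel sg a n Hs).
    rewrite (sum_eq (fun k => rho sg a k * ek a (n - k)) (fun l => tk sg a l * ek a (n - l))).
    rewrite rho_closed by exact Hs. ring.
    intros i _. rewrite rho_closed by exact Hs. reflexivity. }
  apply (isR_ext _ _ _ Ext) in Hl.
  assert (U := eq_trans (eq_sym (is_series_unique _ _ Hm)) (is_series_unique _ _ Hl)).
  assert (Hax : a * x < ln sg).
  { apply Rle_lt_trans with (a * Rabs x). apply Rmult_le_compat_l. lra. apply Rle_abs.
    apply (Rmult_lt_compat_l a) in Hx; [|lra].
    replace (a * (ln sg / a)) with (ln sg) in Hx by (field; lra). exact Hx. }
  assert (HE : E < sg) by (apply exp_lt_sg; auto).
  replace (gfun sg a x) with F. exact (ps_of _ _ _ Hrho).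
  unfold gfun. fold E. apply (Rmult_eq_reg_r (sg - E)); [|lra].
  replace (cc sg a * (E / (sg - E)) * (sg - E)) with (cc sg a * E) by (field; lra).
  fold E in U. nra.
Qed.

Definition g1 (sg a t : R) : R :=
  cc sg a * a * sg * exp (a * t) / (sg - exp (a * t)) ^ 2.
Definition g2 (sg a t : R) : R :=
  cc sg a * a ^ 2 * sg * exp (a * t) * (sg + exp (a * t)) / (sg - exp (a * t)) ^ 3.

Lemma dg sg a t : exp (a * t) < sg -> is_derive (gfun sg a) t (g1 sg a t).
Proof.
  intros H. unfold gfun, g1. auto_derive. lra. field. lra.
Qed.

Lemma dg1 sg a t : exp (a * t) < sg -> is_derive (g1 sg a) t (g2 sg a t).
Proof.
  intros H. assert (Hn : sg - exp (a * t) <> 0) by lra. unfold g1, g2. auto_derive.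
  rewrite Rmult_1_r. apply Rmult_integral_contrapositive; split; lra. field. lra.
Qed.

Lemma in_disk_exp sg a t : 0 < a -> 1 < sg -> Rabs t < ln sg / a -> exp (a * t) < sg.
Proof.
  intros Ha Hs Ht. apply exp_lt_sg; auto.
  apply Rle_lt_trans with (a * Rabs t). apply Rmult_le_compat_l. lra. apply Rle_abs.
  apply (Rmult_lt_compat_l a) in Ht; [|lra].
  replace (a * (ln sg / a)) with (ln sg) in Ht by (field; lra). exact Ht.
Qed.

Lemma loc_disk (P : R -> Prop) R0 t : Rabs t < R0 ->
  (forall u, Rabs u < R0 -> P u) -> locally t P.
Proof.
  intros Ht H. apply (locally_interval _ t (- R0) R0).
  simpl. apply Rabs_def2 in Ht. lra. simpl. apply Rabs_def2 in Ht. lra.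
  intros y H1 H2. simpl in H1, H2. apply H. apply Rabs_def1; lra.
Qed.

Section Moments.
Variables (sg a : R) (Hs : 1 < sg) (Ha : 0 < a) (Hsa : 1 < sg * exp (- a)).

Lemma PS_eq_g t : Rabs t < ln sg / a -> PSeries (rho sg a) t = gfun sg a t.
Proof. intros Ht. apply is_pseries_unique, gen_fun; auto. Qed.

Lemma deriv1 t : Rabs t < ln sg / a -> PSeries (PS_derive (rho sg a)) t = g1 sg a t.
Proof.
  intros Ht.
  assert (H := is_derive_PSeries _ _ (radius_rho sg a Hs Ha Hsa t Ht)).
  assert (L : locally t (fun u => PSeries (rho sg a) u = gfun sg a u)).
  { apply (loc_disk _ (ln sg / a)); auto. intros u Hu. apply PS_eq_g, Hu. }
  assert (H' := is_derive_ext_loc _ _ _ _ L H).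
  rewrite <- (is_derive_unique _ _ _ H').
  apply is_derive_unique, dg, in_disk_exp; auto.
Qed.

Lemma deriv2 t : Rabs t < ln sg / a ->
  PSeries (PS_derive (PS_derive (rho sg a))) t = g2 sg a t.
Proof.
  intros Ht.
  assert (Hr : Rbar_lt (Rabs t) (CV_radius (PS_derive (rho sg a)))).
  { rewrite CV_radius_derive. apply radius_rho; auto. }
  assert (H := is_derive_PSeries _ _ Hr).
  assert (L : locally t (fun u => PSeries (PS_derive (rho sg a)) u = g1 sg a u)).
  { apply (loc_disk _ (ln sg / a)); auto. intros u Hu. apply deriv1, Hu. }
  assert (H' := is_derive_ext_loc _ _ _ _ L H).
  rewrite <- (is_derive_unique _ _ _ H').
  apply is_derive_unique, dg1, in_disk_exp; auto.
Qed.

Lemma one_in : Rabs 1 < ln sg / a.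
Proof.
  rewrite Rabs_pos_eq by lra.
  assert (He := exp_pos a).
  assert (H1 : exp a < sg).
  { rewrite exp_Ropp in Hsa. apply (Rmult_lt_compat_r (exp a)) in Hsa; [|lra].
    rewrite Rmult_assoc, Rinv_l, Rmult_1_r, Rmult_1_l in Hsa by lra. exact Hsa. }
  assert (H2 : a < ln sg).
  { rewrite <- (ln_exp a). apply ln_increasing; lra. }
  apply (Rmult_lt_reg_l a); [lra|]. replace (a * (ln sg / a)) with (ln sg) by (field; lra).
  lra.
Qed.

Lemma ser0 : isR (rho sg a) (gfun sg a 1).
Proof.
  assert (H := ps_to _ _ _ (gen_fun sg a Hs Ha Hsa 1 one_in)).
  eapply isR_ext; [|exact H]. intros n. simpl. rewrite pow1. ring.
Qed.

Lemma ser1 : isR (fun n => INR n * rho sg a n) (g1 sg a 1).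
Proof.
  assert (Hr : Rbar_lt (Rabs 1) (CV_radius (PS_derive (rho sg a)))).
  { rewrite CV_radius_derive. apply radius_rho; auto. apply one_in. }
  assert (H := ps_to _ _ _ (PSeries_correct _ _ (CV_radius_inside _ _ Hr))).
  rewrite deriv1 in H by apply one_in.
  apply is_series_decr_1.
  match goal with |- is_series _ ?L => replace L with (g1 sg a 1) by (cbn; ring) end.
  eapply isR_ext; [|exact H]. intros n. unfold PS_derive. rewrite pow1. ring.
Qed.

Lemma ser2 : isR (fun n => INR n * (INR n - 1) * rho sg a n) (g2 sg a 1).
Proof.
  assert (Hr : Rbar_lt (Rabs 1) (CV_radius (PS_derive (PS_derive (rho sg a))))).
  { rewrite !CV_radius_derive. apply radius_rho; auto. apply one_in. }
  assert (H := ps_to _ _ _ (PSeries_correct _ _ (CV_radius_inside _ _ Hr))).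
  rewrite deriv2 in H by apply one_in.
  apply is_series_decr_1.
  match goal with |- is_series _ ?L => replace L with (g2 sg a 1) by (cbn; ring) end.
  apply is_series_decr_1.
  match goal with |- is_series _ ?L => replace L with (g2 sg a 1) by (cbn; ring) end.
  eapply isR_ext; [|exact H]. intros n. unfold PS_derive. rewrite pow1.
  rewrite !S_INR. ring.
Qed.

End Moments.

Theorem mainTheorem2 (sigma a : R) (Hsigma : 1 < sigma) (Ha : 0 < a)
  (Hsa : 1 < sigma * exp (- a)) :
  (* generating function, on its disc of convergence |x| < ln sigma / a *)
  (forall x : R, Rabs x < ln sigma / a ->
     infinite_sum (fun k => rho sigma a k * x ^ k)
       ((sigma * exp (- a) - 1) * (exp (a * x) / (sigma - exp (a * x))))) /\
  (* closed formula *)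
  (forall k : nat, exists s : R,
     infinite_sum (fun i => INR (S i) ^ k / sigma ^ (S i)) s /\
     rho sigma a k = (sigma * exp (- a) - 1) * (a ^ k / INR (fact k)) * s) /\
  (* probability distribution on N *)
  (forall k : nat, 0 <= rho sigma a k) /\
  infinite_sum (rho sigma a) 1 /\
  (* expectation *)
  infinite_sum (fun k => INR k * rho sigma a k)
    (sigma * a * exp (- a) / (sigma * exp (- a) - 1)) /\
  (* variance *)
  infinite_sum
    (fun k => (INR k - sigma * a * exp (- a) / (sigma * exp (- a) - 1)) ^ 2
              * rho sigma a k)
    (sigma * a * exp (- a) * (sigma * exp (- a) + a - 1)
       / (sigma * exp (- a) - 1) ^ 2).
Proof.
  assert (HE := exp_pos a).
  assert (H1 : exp a < sigma).
  { rewrite exp_Ropp in Hsa. apply (Rmult_lt_compat_r (exp a)) in Hsa; [|lra].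
    rewrite Rmult_assoc, Rinv_l, Rmult_1_r, Rmult_1_l in Hsa by lra. exact Hsa. }
  assert (Hk : exp a * (sigma * / exp a - 1) = sigma - exp a) by (field; lra).
  assert (Hc0 : sigma * / exp a - 1 <> 0).
  { intro Hc. rewrite Hc in Hk. lra. }
  assert (Hg : gfun sigma a 1 = 1).
  { unfold gfun, cc. rewrite Rmult_1_r, exp_Ropp. field. lra. }
  assert (Hm : g1 sigma a 1 = sigma * a * exp (- a) / (sigma * exp (- a) - 1)).
  { unfold g1, cc. rewrite Rmult_1_r, exp_Ropp. field. repeat split; auto; lra. }
  set (mu := sigma * a * exp (- a) / (sigma * exp (- a) - 1)) in *.
  split; [|split; [|split; [|split; [|split]]]].
  - intros x Hx. apply is_series_Reals. exact (ps_to _ _ _ (gen_fun sigma a Hsigma Ha Hsa x Hx)).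
  - intros k. exists (sk sigma k). split.
    + apply is_series_Reals. exact (is_sk sigma k Hsigma).
    + rewrite rho_closed by exact Hsigma. reflexivity.
  - intros k. apply rho_nonneg; auto.
  - apply is_series_Reals. rewrite <- Hg. apply ser0; auto.
  - apply is_series_Reals. rewrite <- Hm. apply ser1; auto.
  - apply is_series_Reals.
    assert (S := isR_plus _ _ _ _
                  (isR_plus _ _ _ _ (ser2 sigma a Hsigma Ha Hsa)
                                    (isR_scal (1 - 2 * mu) _ _ (ser1 sigma a Hsigma Ha Hsa)))
                  (isR_scal (mu ^ 2) _ _ (ser0 sigma a Hsigma Ha Hsa))).
    rewrite Hg, Hm in S.
    match goal with |- is_series _ ?L => replace L with
      (g2 sigma a 1 + (1 - 2 * mu) * mu + mu ^ 2 * 1) end.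
    eapply isR_ext; [|exact S]. intros n. cbv beta. ring.
    unfold mu, g2, cc. rewrite Rmult_1_r, exp_Ropp.
    field. repeat split; auto; lra.
Qed.
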